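(* Let $\{\alpha_k^i\}$ and $\{\tilde\alpha_k^i\}$, $i=1,\dots,n$, be the sequences produced by Algorithm DFL (defined in the context) with fixed $\epsilon>0$. Then $\lim_{k\to\infty}\alpha_k^i=0$ and $\lim_{k\to\infty}\tilde\alpha_k^i=0$ for every $i=1,\dots,n$.
   Context: Problem data: $f:\mathbb{R}^n\to\mathbb{R}$, $g:\mathbb{R}^n\to\mathbb{R}^m$, $h:\mathbb{R}^n\to\mathbb{R}^q$ continuously differentiable; $l,u\in\mathbb{R}^n$ with $l<u$; $X=\{x: l\le x\le u\}$; $S_<=\{x: g(x)<0\}$; there is $x_0\in X\cap S_<$. Fix $\nu>1$. For $\epsilon>0$, $P(x;\epsilon)=f(x)-\epsilon\sum_{j=1}^m\log(-g_j(x))+\frac1\epsilon\sum_{j=1}^q|h_j(x)|^\nu$ if $x\in S_<$, and $P(x;\epsilon)=+\infty$ otherwise. $e^i$ is the $i$-th unit coordinate vector. Expansion Step$(\hat\alpha,y,p,\gamma)$ with parameter $\delta\in(0,1)$ (using the current $\epsilon$): let $b$ be the largest $\beta\ge0$ with $y+\beta p\in X$; set $\alpha\leftarrow\hat\alpha$; repeat: $\check\alpha\leftarrow\min\{b,\alpha/\delta\}$; if $y+\check\alpha p\notin S_<$ return $\alpha$; else if $P(y+\check\alpha p;\epsilon)\le P(y;\epsilon)-\gamma\check\alpha^2$ set $\alpha\leftarrow\check\alpha$ and return if $\check\alpha=b$, else repeat; otherwise return $\alpha$. Algorithm DFL (parameters $\epsilon>0,\gamma>0,\theta\in(0,1),\delta\in(0,1)$,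 $\tilde\alpha_0^i>0$, $d_0^i=e^i$): for $k=0,1,\dots$: set $y_k^1=x_k$. For $i=1,\dots,n$: (a) choose $\hat\alpha\in[0,\tilde\alpha_k^i]$ with $y_k^i+\hat\alpha d_k^i\in S_<\cap X$; if $\hat\alpha>0$ and $P(y_k^i+\hat\alpha d_k^i;\epsilon)\le P(y_k^i;\epsilon)-\gamma\hat\alpha^2$, let $\alpha_k^i$ be the output of the Expansion Step$(\hat\alpha,y_k^i,d_k^i,\gamma)$ and set $\tilde\alpha_{k+1}^i=\alpha_k^i$, $d_{k+1}^i=d_k^i$; (b) otherwise do the same with $-d_k^i$ in place of $d_k^i$, and on success set $\tilde\alpha_{k+1}^i=\alpha_k^i$, $d_{k+1}^i=-d_k^i$; (c) if neither succeeds set $\alpha_k^i=0$, $d_{k+1}^i=d_k^i$, $\tilde\alpha_{k+1}^i=\theta\tilde\alpha_k^i$. Then $y_k^{i+1}=y_k^i+\alpha_k^i d_{k+1}^i$. Finally choose any $x_{k+1}\in S_<\cap X$ with $P(x_{k+1};\epsilon)\le P(y_k^{n+1};\epsilon)$. *)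

(* Defs.v *)
From HB Require Import structures.
From mathcomp Require Import all_boot all_order all_algebra.
From mathcomp Require Import all_classical all_reals all_analysis.
Import Order.TTheory GRing.Theory Num.Theory.
Import numFieldNormedType.Exports.
Local Open Scope ring_scope.

Set Implicit Arguments.
Unset Strict Implicit.
Unset Printing Implicit Defensive.

Section DFLDefs.
Variable R : realType.

Definition C1 (V W : normedModType R) (F : V -> W) : Prop :=
  (forall x, differentiable F x) /\ (forall v : V, continuous (fun x => 'd F x v)).

Variables n m q : nat.

Definition inX (l u x : 'rV[R]_n) : bool :=
  [forall i, (l 0 i <= x 0 i) && (x 0 i <= u 0 i)].

Definition inS (g : 'rV[R]_n -> 'rV[R]_m) (x : 'rV[R]_n) : bool :=
  [forall j, g x 0 j < 0].

Definition Pen (f : 'rV[R]_n -> R) (g : 'rV[R]_n -> 'rV[R]_m)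
  (h : 'rV[R]_n -> 'rV[R]_q) (nu eps : R) (x : 'rV[R]_n) : \bar R :=
  if inS g x then
    (f x - eps * (\sum_(j < m) ln (- g x 0 j))
         + eps^-1 * (\sum_(j < q) powR `|h x 0 j| nu))%:E
  else +oo%E.

Definition unitv (i : 'I_n) : 'rV[R]_n := delta_mx 0 i.

Definition is_max_step (l u y p : 'rV[R]_n) (b : R) : Prop :=
  0 <= b /\ inX l u (y + b *: p) /\
  (forall beta, 0 <= beta -> inX l u (y + beta *: p) -> beta <= b).

Definition suff_decr (Pf : 'rV[R]_n -> \bar R) (y p : 'rV[R]_n) (gamma a : R) : Prop :=
  (Pf (y + a *: p)%R <= Pf y - (gamma * a ^+ 2)%R%:E)%E.

(* The repeat loop of the Expansion Step, with b fixed: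
   expansion a out  means: starting the loop with current alpha = a, the
   returned value is out. *)
Inductive expansion (Pf : 'rV[R]_n -> \bar R) (g : 'rV[R]_n -> 'rV[R]_m)
    (delta gamma b : R) (y p : 'rV[R]_n) : R -> R -> Prop :=
| exp_infeasible a :
    ~~ inS g (y + Num.min b (a / delta) *: p) ->
    expansion Pf g delta gamma b y p a a
| exp_stop_bound a :
    inS g (y + Num.min b (a / delta) *: p) ->
    suff_decr Pf y p gamma (Num.min b (a / delta)) ->
    Num.min b (a / delta) = b ->
    expansion Pf g delta gamma b y p a (Num.min b (a / delta))
| exp_continue a out :
    inS g (y + Num.min b (a / delta) *: p) ->
    suff_decr Pf y p gamma (Num.min b (a / delta)) ->
    Num.min b (a / delta) <> b ->
    expansion Pf g delta gamma b y p (Num.min b (a / delta)) out ->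
    expansion Pf g delta gamma b y p a out
| exp_fail a :
    inS g (y + Num.min b (a / delta) *: p) ->
    ~ suff_decr Pf y p gamma (Num.min b (a / delta)) ->
    expansion Pf g delta gamma b y p a a.

Definition expansion_step (Pf : 'rV[R]_n -> \bar R) (g : 'rV[R]_n -> 'rV[R]_m)
    (l u : 'rV[R]_n) (delta gamma ahat : R) (y p : 'rV[R]_n) (alpha : R) : Prop :=
  exists b, is_max_step l u y p b /\ expansion Pf g delta gamma b y p ahat alpha.

(* One inner iteration (index i) of DFL at outer iteration k:
   from y = y_k^i, p = d_k^i, at = tilde alpha_k^i, produces
   alpha = alpha_k^i, ta' = tilde alpha_{k+1}^i, p' = d_{k+1}^i. *)
Definition DFL_inner (Pf : 'rV[R]_n -> \bar R) (g : 'rV[R]_n -> 'rV[R]_m)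
    (l u : 'rV[R]_n) (gamma theta delta : R) (y p : 'rV[R]_n) (ta : R)
    (alpha ta' : R) (p' : 'rV[R]_n) : Prop :=
  exists a1, 0 <= a1 <= ta /\ inS g (y + a1 *: p) /\ inX l u (y + a1 *: p) /\
   ((0 < a1 /\ suff_decr Pf y p gamma a1 /\
       expansion_step Pf g l u delta gamma a1 y p alpha /\ ta' = alpha /\ p' = p)
    \/
    (~ (0 < a1 /\ suff_decr Pf y p gamma a1) /\
     exists a2, 0 <= a2 <= ta /\ inS g (y + a2 *: (- p)) /\ inX l u (y + a2 *: (- p)) /\
      ((0 < a2 /\ suff_decr Pf y (- p) gamma a2 /\
          expansion_step Pf g l u delta gamma a2 y (- p) alpha /\ ta' = alpha /\ p' = - p)
       \/
       (~ (0 < a2 /\ suff_decr Pf y (- p) gamma a2) /\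
          alpha = 0 /\ p' = p /\ ta' = theta * ta)))).

(* x, y, alpha, atil, d are the sequences x_k, y_k^i (i = 0..n, i.e. y_k^{i+1}),
   alpha_k^i, tilde alpha_k^i, d_k^i (i : 'I_n, i.e. indices 1..n shifted by one)
   produced by Algorithm DFL started at x0 with parameters eps, gamma, theta,
   delta and initial steps atil0. *)
Definition DFL_run (f : 'rV[R]_n -> R) (g : 'rV[R]_n -> 'rV[R]_m)
    (h : 'rV[R]_n -> 'rV[R]_q) (l u : 'rV[R]_n) (nu eps gamma theta delta : R)
    (x0 : 'rV[R]_n) (atil0 : 'I_n -> R)
    (x : nat -> 'rV[R]_n) (y : nat -> nat -> 'rV[R]_n)
    (alpha atil : nat -> 'I_n -> R) (d : nat -> 'I_n -> 'rV[R]_n) : Prop :=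
  let Pf := Pen f g h nu eps in
  x 0%N = x0 /\
  (forall i, atil 0%N i = atil0 i) /\
  (forall i, d 0%N i = unitv i) /\
  forall k : nat,
    y k 0%N = x k /\
    (forall i : 'I_n,
       DFL_inner Pf g l u gamma theta delta (y k i) (d k i) (atil k i)
         (alpha k i) (atil k.+1 i) (d k.+1 i) /\
       y k i.+1 = y k i + alpha k i *: d k.+1 i) /\
    inS g (x k.+1) /\ inX l u (x k.+1) /\
    (Pf (x k.+1) <= Pf (y k n))%E.

End DFLDefs.

(* Main.v *)
Require Import Defs.
From HB Require Import structures.
From mathcomp Require Import all_boot all_order all_algebra.
From mathcomp Require Import all_classical all_reals all_analysis.
From mathcomp Require Import ring lra.
Import Order.TTheory GRing.Theory Num.Theory.
Import numFieldNormedType.Exports.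
Local Open Scope classical_set_scope.
Local Open Scope ring_scope.
Set Implicit Arguments.
Unset Strict Implicit.

Lemma box_lb (R : realType) (n : nat) (l u x0 : 'rV[R]_n) (phi : 'rV[R]_n -> R) :
  continuous phi -> inX l u x0 ->
  exists M, forall x, inX l u x -> M <= phi x.
Proof.
move=> cphi X0.
have AE : [set x | inX l u x] = [set v : 'rV[R]_n | forall i, (`[l 0 i, u 0 i]%classic : set R) (v ord0 i)].
  apply/seteqP; split => v /=.
    by move=> /forallP H i; rewrite /= in_itv /=; have := H i.
  by move=> H; apply/forallP => i; have := H i; rewrite /= in_itv.
have cA : compact [set x | inX l u x].
  by rewrite AE; apply: (@rV_compact _ _ (fun i => `[l 0 i, u 0 i]%classic)) => i; exact: segment_compact.
have [c _ Hc] := @EVT_min_rV R n phi [set x | inX l u x] (ex_intro _ x0 X0) cA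
  (continuous_subspaceT cphi).
by exists (phi c) => x Hx; apply: Hc; rewrite inE.
Qed.

Lemma exp_suff (R : realType) (n m : nat) (Pf : 'rV[R]_n -> \bar R) (g : 'rV[R]_n -> 'rV[R]_m)
  delta gamma b y p a out :
  expansion Pf g delta gamma b y p a out -> suff_decr Pf y p gamma a ->
  suff_decr Pf y p gamma out.
Proof. by elim => // a0 out0 _ H _ _ IH _; exact: IH. Qed.

Lemma inner_decr (R : realType) (n m : nat) (Pf : 'rV[R]_n -> \bar R) (g : 'rV[R]_n -> 'rV[R]_m)
  l u gamma theta delta y p ta al ta' p' :
  DFL_inner Pf g l u gamma theta delta y p ta al ta' p' ->
  (Pf (y + al *: p')%R <= Pf y - (gamma * al ^+ 2)%R%:E)%E /\ (ta' = al \/ ta' = theta * ta).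
Proof.
case=> a1 [_ [_ [_ [[_ [s1 [[b [_ E]] [-> ->]]]]|[_ [a2 [_ [_ [_ [[_ [s2 [[b [_ E]] [-> ->]]]]|[_ [-> [-> ->]]]]]]]]]]]]].
- by split; [exact: (exp_suff E s1)|left].
- by split; [exact: (exp_suff E s2)|left].
- by split; [rewrite scale0r addr0 expr0n /= mulr0 sube0|right].
Qed.

Lemma chain (R : realType) (s : nat -> \bar R) N :
  (forall j, (j < N)%N -> (s j.+1 <= s j)%E) ->
  forall a b, (a <= b <= N)%N -> (s b <= s a)%E.
Proof.
move=> H a; elim=> [|b IH] /andP[ab bN].
  by move: ab; rewrite leqn0 => /eqP ->.
move: ab; rewrite leq_eqVlt => /orP[/eqP -> //| ab].
apply: le_trans (H b bN) _; apply: IH; rewrite -ltnS ab /=; exact: ltnW.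
Qed.

Lemma pen_lb (R : realType) (n m q : nat)
  (f : 'rV[R]_n -> R) (g : 'rV[R]_n -> 'rV[R]_m) (h : 'rV[R]_n -> 'rV[R]_q)
  (l u x0 : 'rV[R]_n) (nu eps : R) :
  C1 f -> C1 g -> 0 < eps -> inX l u x0 ->
  exists M, forall x, inS g x -> inX l u x ->
    (M%:E <= Pen f g h nu eps x)%E.
Proof.
move=> [df _] [dg _] eps0 X0.
have cf : continuous f by move=> x; exact: differentiable_continuous.
have [Fm HF] := box_lb cf X0.
have Hg : forall j : 'I_m, exists G, forall x, inX l u x -> G <= g x 0 j.
  move=> j; apply: (box_lb (phi := fun x => g x 0 j)) X0 => x.
  apply: (@continuous_comp _ _ _ g (fun M : 'rV[R]_m => M 0 j)).
    exact: differentiable_continuous.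
  exact: coord_continuous.
have [G HG] := choice Hg.
exists (Fm - eps * \sum_(j < m) (- G j)) => x Sx Xx.
rewrite /Pen Sx lee_fin.
have H1 : \sum_(j < m) ln (- g x 0 j) <= \sum_(j < m) (- G j).
  apply: ler_sum => j _.
  have gj : 0 < - g x 0 j by rewrite oppr_gt0; move/forallP: Sx; exact.
  apply: le_trans (ltW (ln_sublinear gj)) _.
  by rewrite lerN2; exact: HG.
have H2 : 0 <= eps^-1 * \sum_(j < q) powR `|h x 0 j| nu.
  by apply: mulr_ge0; [rewrite invr_ge0 ltW|apply: sumr_ge0 => j _; exact: powR_ge0].
have H3 := HF x Xx.
have H4 : eps * \sum_(j < m) ln (- g x 0 j) <= eps * \sum_(j < m) (- G j).
  by rewrite ler_pM2l.
lra.
Qed.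

Unset Implicit Arguments.
Set Strict Implicit.

Theorem proposition3p2 (R : realType) (n m q : nat)
  (f : 'rV[R]_n -> R) (g : 'rV[R]_n -> 'rV[R]_m) (h : 'rV[R]_n -> 'rV[R]_q)
  (l u x0 : 'rV[R]_n) (nu eps gamma theta delta : R) (atil0 : 'I_n -> R) :
  C1 f -> C1 g -> C1 h ->
  (forall i, l 0 i < u 0 i) ->
  inX l u x0 -> inS g x0 ->
  1 < nu -> 0 < eps -> 0 < gamma ->
  0 < theta < 1 -> 0 < delta < 1 ->
  (forall i, 0 < atil0 i) ->
  forall (x : nat -> 'rV[R]_n) (y : nat -> nat -> 'rV[R]_n)
         (alpha atil : nat -> 'I_n -> R) (d : nat -> 'I_n -> 'rV[R]_n),
  DFL_run f g h l u nu eps gamma theta delta x0 atil0 x y alpha atil d ->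
  forall i : 'I_n,
    (fun k => alpha k i) @ \oo --> (0 : R) /\
    (fun k => atil k i) @ \oo --> (0 : R).
Proof.
move=> C1f C1g C1h lu X0 S0 nu1 eps0 gam0 /andP[th0 th1] /andP[de0 de1] at0
  x y alpha atil d [Hx0 [Hat0 [Hd0 Hk]]] i.
set Pf := Pen f g h nu eps.
have SX : forall k, inS g (x k) /\ inX l u (x k).
  by case=> [|k]; [rewrite Hx0|have := Hk k; case=> _ [_ [? [? _]]]].
pose pr k := fine (Pf (x k)).
have Pxk : forall k, Pf (x k) = (pr k)%:E.
  by move=> k; rewrite /pr /Pf /Pen (SX k).1.
have [M HM] := pen_lb h nu C1f C1g eps0 X0.
have lb : forall k, M <= pr k.
  by move=> k; rewrite -lee_fin -Pxk; apply: HM; case: (SX k).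
have dec : forall k (j : 'I_n), pr k.+1 <= pr k - gamma * alpha k j ^+ 2.
  move=> k j.
  have [Hy0 [Hyi [_ [_ HP]]]] := Hk k.
  have st : forall j' : 'I_n, (Pf (y k j'.+1) <= Pf (y k j') - (gamma * alpha k j' ^+ 2)%:E)%E.
    move=> j'; have [Hin Hyj] := Hyi j'; rewrite Hyj.
    exact: (inner_decr Hin).1.
  have st' : forall j', (j' < n)%N -> (Pf (y k j'.+1) <= Pf (y k j'))%E.
    move=> j' Hj; apply: le_trans (st (Ordinal Hj)) _.
    by rewrite leeBlDr // leeDl // lee_fin; apply: mulr_ge0; [exact: ltW|exact: sqr_ge0].
  have c1 : (Pf (y k n) <= Pf (y k j.+1))%E.
    by apply: (chain st'); rewrite leqnn ltn_ord.
  have c2 : (Pf (y k j) <= Pf (y k 0%N))%E.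
    by apply: (chain st'); rewrite leq0n /= ltnW.
  rewrite Hy0 Pxk in c2.
  rewrite -lee_fin -Pxk EFinB.
  apply: le_trans HP _; apply: le_trans c1 _; apply: le_trans (st j) _.
  exact: leeB.
have ni : forall k, pr k.+1 <= pr k.
  move=> k; apply: le_trans (dec k i) _.
  by rewrite lerBlDr lerDl; apply: mulr_ge0; [exact: ltW|exact: sqr_ge0].
have cv : cvgn pr.
  apply: nonincreasing_is_cvgn; first by apply/nonincreasing_seqP => k; exact: ni.
  by exists M => _ [k _ <-]; exact: lb.
have Ha : (fun k => alpha k i) @ \oo --> (0 : R).
  apply/cvgrPdist_lt => e e0.
  have c0 : 0 < gamma * e ^+ 2 / 2 by rewrite divr_gt0 // mulr_gt0 // exprn_gt0.
  have [N _ HN] := (cvgrPdist_lt _ _).1 cv _ c0.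
  exists N => // k /= Nk.
  have h1 := HN k Nk; have h2 := HN k.+1 (leqW Nk).
  move: h1 h2; rewrite /= !ltr_norml => /andP[h1 h1'] /andP[h2 h2'].
  have dk := dec k i.
  suff : `|alpha k i| < e by rewrite ltr_norml; lra.
  have aa : `|alpha k i| ^+ 2 = alpha k i ^+ 2 by rewrite real_normK // num_real.
  have na : 0 <= `|alpha k i| by [].
  have ge : gamma * alpha k i ^+ 2 < gamma * e ^+ 2 by lra.
  rewrite ltr_pM2l // -aa in ge.
  nra.
split => //.
have Hor : forall k, atil k.+1 i = alpha k i \/ atil k.+1 i = theta * atil k i.
  by move=> k; have [_ [Hyi _]] := Hk k; exact: (inner_decr (Hyi i).1).2.
apply/cvgrPdist_le => e e0.
have e20 : 0 < e / 2 by rewrite divr_gt0.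
have [N1 _ HN1] := (cvgrPdist_lt _ _).1 Ha _ e20.
have Hst : forall k, (N1 <= k)%N -> `|atil k.+1 i| <= e / 2 \/ `|atil k.+1 i| <= theta * `|atil k i|.
  move=> k Nk; case: (Hor k) => ->; [left|right].
    by have := HN1 k Nk; rewrite /= sub0r normrN => /ltW.
  by rewrite normrM ger0_norm // ltW.
pose A := `|atil N1 i|.
have H1 : forall j, `|atil (N1 + j)%N i| <= e / 2 + theta ^+ j * A.
  elim=> [|j IH]; first by rewrite addn0 expr0 mul1r /A; lra.
  rewrite addnS; case: (Hst (N1 + j)%N (leq_addr _ _)) => H.
    have : 0 <= theta ^+ j.+1 * A by apply: mulr_ge0; [apply: exprn_ge0; exact: ltW|exact: normr_ge0].
    lra.
  apply: le_trans H _; rewrite exprS -mulrA.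
  have : theta * `|atil (N1 + j)%N i| <= theta * (e / 2 + theta ^+ j * A).
    by rewrite ler_pM2l.
  have : theta * (e / 2) <= e / 2 by rewrite ler_piMl // ltW.
  rewrite mulrDr; lra.
have ct : (fun j => theta ^+ j * A) @ \oo --> (0 : R).
  rewrite -(mul0r A); apply: cvgMr_tmp; apply: cvg_expr.
  by rewrite ger0_norm // ltW.
have [J _ HJ] := (cvgrPdist_lt _ _).1 ct _ e20.
have HJ' : `|atil (N1 + J)%N i| <= e.
  have := HJ J (leqnn J); rewrite /= sub0r normrN => h1.
  have := H1 J; move: h1; rewrite ltr_norml; lra.
have H2 : forall j, `|atil (N1 + J + j)%N i| <= e.
  elim=> [|j IH]; first by rewrite addn0.
  rewrite addnS; case: (Hst (N1 + J + j)%N); first by rewrite -addnA leq_addr.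
    move=> H; lra.
  move=> H; apply: le_trans H _.
  have : theta * `|atil (N1 + J + j)%N i| <= theta * e by rewrite ler_pM2l.
  nra.
exists (N1 + J)%N => // k /= Hk'.
rewrite sub0r normrN -(subnKC Hk'); exact: H2.
Qed.
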